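(* Let $n\geq 4$ be an integer divisible by $2$ or by $3$. Then $t(n)\leq n-3$.
   Context: For a positive integer $n$ let $S(\mathbb{Z}_n)$ be the set of bijections $\mathbb{Z}_n\to\mathbb{Z}_n$ (identified with $S_n$). For $\pi\in S(\mathbb{Z}_n)$, $\mathrm{cyc}(\pi)$ is the number of cycles (including fixed points) in its cycle decomposition, and $t(\pi)=n-\mathrm{cyc}(\pi)$ is the minimum number of transpositions whose product is $\pi$. The circular class of $\pi$ is $[\pi]=\{x\mapsto \pi(x+b): b\in\mathbb{Z}_n\}$, $t([\pi])=\min_{\sigma\in[\pi]}t(\sigma)$, and $t(n)=\max_{\pi\in S(\mathbb{Z}_n)}t([\pi])$. *)

(* Defs.v *)
From mathcomp Require Import all_boot all_order all_fingroup.
Set Implicit Arguments. Unset Strict Implicit. Unset Printing Implicit Defensive.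
Local Open Scope group_scope.

(* Z_n is represented by 'I_n with addition modulo n; rot n is x |-> x + 1 (mod n). *)
Definition rot (n : nat) : {perm 'I_n} := perm (@ordS_inj n).

(* the map x |-> pi (x + b); in mathcomp (s * t) x = t (s x) *)
Definition circ_shift (n : nat) (pi : {perm 'I_n}) (b : nat) : {perm 'I_n} :=
  (rot n ^+ b) * pi.

(* number of cycles, including fixed points *)
Definition cyc (n : nat) (pi : {perm 'I_n}) : nat := #|porbits pi|.

(* minimum number of transpositions: t(pi) = n - cyc(pi) *)
Definition tnum (n : nat) (pi : {perm 'I_n}) : nat := n - cyc pi.

Definition tclass (n : nat) (pi : {perm 'I_n}) : nat :=
  \big[minn/tnum pi]_(b < n) tnum (circ_shift pi b).

Definition tmax (n : nat) : nat := \max_(pi : {perm 'I_n}) tclass pi.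

Lemma circ_shiftE n (pi : {perm 'I_n}) b x :
  circ_shift pi b x = pi (iter b (@ordS n) x).
Proof.
rewrite /circ_shift permM; congr (pi _).
elim: b => [|b IH]; first by rewrite expg0 perm1.
by rewrite expgSr permM IH /rot permE.
Qed.

(* Main.v *)
Require Import Defs.
From mathcomp Require Import all_boot all_order all_fingroup.
From mathcomp Require Import all_algebra zify ring.
Set Implicit Arguments. Unset Strict Implicit. Unset Printing Implicit Defensive.
Import GRing.Theory.

Section Gen.
Variable T : finType.
Implicit Types s : {perm T}.

Lemma porbit_fix s x : s x = x -> porbit s x = [set x].
Proof.
move=> sx; apply/setP=> y; rewrite inE; apply/porbitP/eqP => [[i ->]|->].
  by elim: i => [|i IH]; rewrite ?expg0 ?perm1 // expgSr permM IH.
by exists 0; rewrite expg0 perm1.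
Qed.

Lemma porbit2 s u v : s u = v -> s v = u -> porbit s u \subset [set u; v].
Proof.
move=> su sv; apply/subsetP=> y /porbitP[i ->].
elim: i => [|i]; first by rewrite expg0 perm1 !inE eqxx.
rewrite expgSr permM !inE => /orP[]/eqP->; by rewrite ?su ?sv eqxx ?orbT.
Qed.

Lemma cyc3 s a b c : a \notin porbit s b -> a \notin porbit s c ->
  b \notin porbit s c -> 3 <= #|porbits s|.
Proof.
move=> ab ac bc.
have sub: [set porbit s a; porbit s b; porbit s c] \subset porbits s.
  by apply/subsetP=> P; rewrite !inE -orbA => /or3P[]/eqP->; apply: imset_f.
apply: leq_trans (subset_leq_card sub).
rewrite -setUA cardsU1 cards2 !inE !eq_porbit_mem.
by rewrite (negbTE ab) (negbTE ac) (negbTE bc).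
Qed.

Lemma cyc2 s a b : a \notin porbit s b -> 2 <= #|porbits s|.
Proof.
move=> ab.
have sub: [set porbit s a; porbit s b] \subset porbits s.
  by apply/subsetP=> P; rewrite !inE => /orP[]/eqP->; apply: imset_f.
apply: leq_trans (subset_leq_card sub).
by rewrite cards2 eq_porbit_mem ab.
Qed.

Lemma fresh (A : {set T}) : #|A| < #|T| -> exists z, z \notin A.
Proof.
move=> H; case: (pickP (predC (mem A))) => [z Hz|H0]; first by exists z.
suff : #|T| <= #|A| by rewrite leqNgt H.
apply: subset_leq_card; apply/subsetP=> x _; move: (H0 x) => /=.
by case: (x \in A).
Qed.

End Gen.

Lemma bigmin_le (I : eqType) (r : seq I) (F : I -> nat) x0 i :
  i \in r -> \big[minn/x0]_(j <- r) F j <= F i.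
Proof.
elim: r => //= a r IH; rewrite in_cons big_cons => /orP[/eqP->|/IH h].
  exact: geq_minl.
exact: leq_trans (geq_minr _ _) h.
Qed.

Lemma ordS_add m (x : 'I_m.+2) : ordS x = (x + 1)%R.
Proof. by apply: val_inj => /=; rewrite modnDmr addn1. Qed.

Lemma iter_ordS m (x : 'I_m.+2) b : iter b (@ordS _) x = (x + b%:R)%R.
Proof.
elim: b => [|b IH]; first by rewrite addr0.
by rewrite iterS IH ordS_add mulrSr addrA.
Qed.

Lemma shiftE m (pi : {perm 'I_m.+2}) (b : 'I_m.+2) x :
  circ_shift pi b x = pi (x + b)%R.
Proof. by rewrite circ_shiftE iter_ordS natr_Zp. Qed.

Lemma rotX n b x : (Defs.rot n ^+ b)%g x = iter b (@ordS _) x.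
Proof. by have := circ_shiftE 1 b x; rewrite /circ_shift mulg1 perm1. Qed.

Lemma cyc_rot m : #|porbits (Defs.rot m.+2)| = 1.
Proof.
suff -> : porbits (Defs.rot m.+2) = [set porbit (Defs.rot m.+2) 0%R] by rewrite cards1.
apply/setP=> P; rewrite inE; apply/imsetP/eqP => [[x _ ->]|->]; last by exists 0%R.
apply/eqP; rewrite eq_porbit_mem; apply/porbitP; exists x.
by rewrite rotX iter_ordS add0r natr_Zp.
Qed.

Lemma sumsq n : 6 * (\sum_(i < n.+1) i ^ 2) = n * n.+1 * (2 * n).+1.
Proof.
elim: n => [|n IH]; first by rewrite big_ord_recr big_ord0.
rewrite big_ord_recr /= mulnDr IH. nia.
Qed.

Lemma arith n : 3 %| n.+1 -> n.+1 %| 2 * (\sum_(i < n.+1) i ^ 2) -> False.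
Proof.
move=> /dvdnP[j hj] /dvdnP[q hq].
have h : 6 * (q * n.+1) = 2 * (n * n.+1 * (2 * n).+1) by rewrite -hq mulnCA sumsq.
have h2 : 3 * q = n * (2 * n).+1.
  apply/eqP; rewrite -(eqn_pmul2r (ltn0Sn n)); apply/eqP. nia.
nia.
Qed.

Lemma key m (pi : {perm 'I_m.+4}) : (2 %| m.+4) || (3 %| m.+4) ->
  exists b : 'I_m.+4, 3 <= cyc (circ_shift pi b).
Proof.
move=> hdiv.
case: (boolP [exists b : 'I_m.+4, 3 <= cyc (circ_shift pi b)]) => [/existsP//|].
move/existsPn => H; exfalso.
have H2 : forall b : 'I_m.+4, cyc (circ_shift pi b) <= 2.
  by move=> b; have := H b; rewrite leqNgt negbK.
pose sg (b : 'I_m.+4) := circ_shift pi b.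
have hA : forall b x y, sg b x = x -> sg b y = y -> x = y.
  move=> b x y hx hy; apply/eqP; apply/negPn/negP => nxy.
  have [z hz] : exists z, z \notin [set x; y].
    by apply: fresh; rewrite cards2 card_ord; case: (x != y).
  have := H2 b; rewrite leqNgt => /negP; apply.
  move: hz; rewrite !inE negb_or => /andP[zx zy].
  apply: (@cyc3 _ _ z x y); rewrite !porbit_fix // inE //; by rewrite eq_sym.
pose d (y : 'I_m.+4) := (y - pi y)%R.
have dfix : forall y, sg (d y) (pi y) = pi y.
  by move=> y; rewrite /sg shiftE /d addrC subrK.
have dinj : injective d.
  move=> y1 y2 e; apply: (@perm_inj _ pi); apply: (hA (d y1)); first exact: dfix.
  by rewrite e dfix.
have [dinv dK dKV] := injF_bij dinj.
have hfix : forall b, sg b (pi (dinv b)) = pi (dinv b).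
  by move=> b; rewrite -{1}(dKV b) dfix.
have hcyc2 : forall b, cyc (sg b) = 2.
  move=> b; apply/eqP; rewrite eqn_leq H2 /=.
  have [z hz] : exists z, z \notin [set pi (dinv b)].
    by apply: fresh; rewrite cards1 card_ord.
  apply: (@cyc2 _ _ z (pi (dinv b))).
  by rewrite porbit_fix ?hfix.
case/orP: hdiv => [h2|h3].
  have h0 := hcyc2 ord0.
  have h1 := hcyc2 (Ordinal (isT : 1 < m.+4)).
  have : odd_perm (sg ord0) = odd_perm (sg (Ordinal (isT : 1 < m.+4))).
    by rewrite /odd_perm; move: h0 h1; rewrite /cyc => -> ->.
  rewrite /sg /circ_shift /= expg0 expg1 mul1g odd_permM.
  rewrite {2}/odd_perm cyc_rot card_ord.
  by move: h2; rewrite dvdn2 /=; case: (odd m) => //= _; case: (odd_perm pi).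
pose e (y : 'I_m.+4) := (y + pi y)%R.
have einj : injective e.
  move=> u v huv; apply/eqP; apply/negPn/negP => nuv.
  pose b := (v - pi u)%R.
  pose x1 := (u - b)%R. pose x2 := (v - b)%R.
  have s1 : sg b x1 = x2 by rewrite /sg shiftE /x1 subrK /x2 /b; ring.
  have hv : pi v = (u + pi u - v)%R by rewrite -[(u + pi u)%R]/(e u) huv /e; ring.
  have s2 : sg b x2 = x1 by rewrite /sg shiftE /x2 subrK hv /x1 /b; ring.
  have n12 : x1 != x2 by apply: contra nuv => /eqP /addIr ->.
  pose x0 := pi (dinv b).
  have f0 : sg b x0 = x0 by apply: hfix.
  have n01 : x0 != x1 by apply/negP => /eqP e01; move: n12; rewrite -s1 -e01 f0 e01 eqxx.
  have n02 : x0 != x2 by apply/negP => /eqP e02; move: n12; rewrite -s2 -e02 f0 e02 eqxx.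
  have [z hz] : exists z, z \notin [set x0; x1; x2].
    apply: fresh; rewrite card_ord -setUA cardsU1 cards2; case: (_ \notin _); case: (_ != _) => //.
  move: hz; rewrite !inE !negb_or => /andP[/andP[z0 z1] z2].
  have sub := porbit2 s1 s2.
  have := H2 b; rewrite leqNgt => /negP; apply.
  apply: (@cyc3 _ _ z x1 x0).
  - by apply/negP => /(subsetP sub); rewrite !inE (negbTE z1) (negbTE z2).
  - by rewrite (porbit_fix f0) inE.
  - by rewrite (porbit_fix f0) inE eq_sym.
pose S := (\sum_(y : 'I_m.+4) y ^+ 2)%R.
have Sd : (\sum_y (d y) ^+ 2)%R = S by rewrite /S [RHS](reindex_inj dinj).
have Se : (\sum_y (e y) ^+ 2)%R = S by rewrite /S [RHS](reindex_inj einj).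
have Sp : (\sum_y (pi y) ^+ 2)%R = S by rewrite /S [RHS](reindex_inj (@perm_inj _ pi)).
have E0 : (\sum_y ((d y)^+2 + (e y)^+2) = \sum_y ((y^+2) * 2 + (pi y)^+2 * 2))%R.
  by apply: eq_bigr => y _; rewrite /d /e; ring.
rewrite !big_split /= Sd Se -!mulr_suml Sp -/S in E0.
have hS : (S * 2 = 0)%R.
  apply/(@addrI _ (S*2)%R); rewrite addr0 -E0; ring.
have SE : S = (((\sum_(i < m.+4) i ^ 2)%N)%:R)%R.
  by rewrite /S natr_sum; apply: eq_bigr => i _; rewrite natrX natr_Zp.
rewrite SE -natrM Zp_nat in hS.
move/(congr1 val): hS => /= hS.
apply: (@arith m.+3 h3); rewrite mulnC; apply/eqP; exact: hS.
Qed.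


Theorem theorem1p3 (n : nat) :
  4 <= n -> (2 %| n) || (3 %| n) -> tmax n <= n - 3.
Proof.
case: n => [|[|[|[|m]]]] // _ hdiv.
apply/bigmax_leqP => pi _.
have [b Hb] := key pi hdiv.
rewrite /tclass; apply: leq_trans (bigmin_le _ _ (mem_index_enum b)) _.
by rewrite /tnum leq_sub2l.
Qed.
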